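(* In any execution of $\mathcal{U}$, suppose operation $o$ is complete, and let the unique execution of line 12 for $o$ that returned true be GCAS$(=, S, -, (t(o), s, r, h(o)))$. Then the response returned by DoOp$(o)$ at line 14 is $r$.
   Context: Model: an asynchronous shared-memory system with possibly infinitely many processes, any of which may crash, communicating via atomic shared objects. A fetch-and-increment (F\&I) object stores an integer; F\&I$(C)$ atomically returns the current value and increments it. A generalized-compare-and-swap (GCAS) object $O$ stores a value and supports Read$(O)$ and GCAS$(c, O, v_1, v_2)$, which atomically does: if $c(\text{current value of } O, v_1)$ holds then set $O := v_2$ and return true, else return false. Tuples are compared componentwise for $=$; GCAS$(>, A, (t,-,-), v)$ succeeds iff the time field of $A$ is strictly greater than $t$. Implemented type $\mathcal{T} = (OP, RES, Q, \delta)$ with initial state $s_0$; a procedure $apply_{\mathcal{T}}(o,s)$ returns some $(s',r)$ with $(s,o,s',r)\in\delta$. $NULL$ is a value different from every response of $\mathcal{T}$, and $NOOP$ is a name different from every operation of $\mathcal{T}$. Algorithm $\mathcal{U}$: each process $p$ owns a GCAS object $H_p$ with fields $(time, response)$. Shared objects: F\&I object $C$, initially $1$; GCAS object $A$ with fields $(time, op, ptr)$, initially $(0, NOOP, h(NOOP))$, where $h(NOOP)$ is a pointer to an immutable location containing $(0,\perp)$; GCAS object $S$ with fields $(time, state, response, ptr)$, initially $(0, s_0, \perp, h(NOOP))$. Process $p$ performs operation $o$ by calling DoOp$(o)$: (1) DoOp$(o)$ invoked; (2) $t := $ F\&I$(C)$; (3) $H_p := (t, NULL)$; (4) while $H_p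 = (t, NULL)$ do: (5) $(t^*, s^*, r^*, roptr^* ) := S$; (6) GCAS$(=, *roptr^*, (t^*, NULL), (t^*, r^* ))$; (7) GCAS$(>, A, (t,-,-), (t, o, \&H_p))$; (8) $(t', o', roptr') := A$; (9) $(\hat t, \hat r) := *roptr'$; (10) if $(\hat t,\hat r) = (t', NULL)$ then (11) $(s', r') := apply_{\mathcal{T}}(o', s^* )$; (12) GCAS$(=, S, (t^*,s^*,r^*,roptr^* ), (t', s', r', roptr'))$; (13) else GCAS$(=, A, (t', o', roptr'), (t, o, \&H_p))$; end while; (14) return $H_p.response$. Notation: an ''operation'' $o$ means one invocation of DoOp$(o)$. $p(o)$ is the process executing it; $t(o)$ is the value returned by its F\&I at line 2; $h(o)$ is $H_{p(o)}$. Operation $o$ is complete if $p(o)$ executed line 14 in DoOp$(o)$. ''Line 12 is executed for $o$'' means the new value written in that GCAS has the form $(t(o), -, r, h(o))$; for a complete operation there is exactly one such execution that returns true. *)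

(* Defs.v *)
(* Processes are identified by natural numbers (infinitely
   many potential processes); a crash is simply a process that stops taking
   steps, which the arbitrary interleaving already allows. *)
From Stdlib Require Import List PeanoNat.
Import ListNotations.

Set Implicit Arguments.

(* Pointers stored in the ptr fields: h(NOOP) or &H_q. *)
Inductive Ptr := HNoop | HPtr (q : nat).

Inductive Resp (Res : Type) := RNull | RBot | RVal (r : Res).
Arguments RNull {Res}.
Arguments RBot {Res}.

Section Semantics.
Context (Op Res St : Type).

(* Program counter together with the local variables of DoOp(o).
   Lk = "about to execute line k". *)
Inductive Loc :=
| Idle
| L2 (o : Op)
| L3 (o : Op) (t : nat)
| L4 (o : Op) (t : nat)
| L5 (o : Op) (t : nat)
| L6 (o : Op) (t ts : nat) (ss : St) (rs : Resp Res) (ps : Ptr)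
| L7 (o : Op) (t ts : nat) (ss : St) (rs : Resp Res) (ps : Ptr)
| L8 (o : Op) (t ts : nat) (ss : St) (rs : Resp Res) (ps : Ptr)
| L9 (o : Op) (t ts : nat) (ss : St) (rs : Resp Res) (ps : Ptr)
     (t' : nat) (o' : option Op) (p' : Ptr)
| L10 (o : Op) (t ts : nat) (ss : St) (rs : Resp Res) (ps : Ptr)
     (t' : nat) (o' : option Op) (p' : Ptr) (th : nat) (rh : Resp Res)
| L11 (o : Op) (t ts : nat) (ss : St) (rs : Resp Res) (ps : Ptr)
     (t' : nat) (o' : option Op) (p' : Ptr)
| L12 (o : Op) (t ts : nat) (ss : St) (rs : Resp Res) (ps : Ptr)
     (t' : nat) (o' : option Op) (p' : Ptr) (s' : St) (r' : Res)
| L13 (o : Op) (t : nat) (t' : nat) (o' : option Op) (p' : Ptr)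
| L14 (o : Op) (t : nat).

(* Global configuration.  The op field of A uses None for NOOP. *)
Record Conf := mkConf {
  cC : nat;
  cA : nat * option Op * Ptr;
  cS : nat * St * Resp Res * Ptr;
  cH : nat -> nat * Resp Res;
  cLoc : nat -> Loc }.

Inductive Ev :=
| EvInv (p : nat) (o : Op)                       (* line 1: DoOp(o) invoked *)
| EvFAI (p : nat) (t : nat)                      (* line 2: F&I returned t *)
| EvL12 (p : nat) (newv : nat * St * Resp Res * Ptr) (ok : bool)
                                                 (* line 12: GCAS on S with new value newv, result ok *)
| EvRet (p : nat) (v : Resp Res)                 (* line 14: returned v *)
| EvLocal (p : nat).                             (* any other line *)

Definition upd {X : Type} (f : nat -> X) (p : nat) (x : X) : nat -> X :=
  fun q => if Nat.eq_dec q p then x else f q.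

(* *h(NOOP) is the immutable location (0, bottom). *)
Definition deref (c : Conf) (ptr : Ptr) : nat * Resp Res :=
  match ptr with HNoop => (0, RBot) | HPtr q => cH c q end.

Definition setC c x := mkConf x (cA c) (cS c) (cH c) (cLoc c).
Definition setA c x := mkConf (cC c) x (cS c) (cH c) (cLoc c).
Definition setS c x := mkConf (cC c) (cA c) x (cH c) (cLoc c).
Definition setH c x := mkConf (cC c) (cA c) (cS c) x (cLoc c).
Definition setL c p l := mkConf (cC c) (cA c) (cS c) (cH c) (upd (cLoc c) p l).

Context (applyT : Op -> St -> St -> Res -> Prop).
(* applyT o s s' r : "apply_T(o,s) may return (s',r)" *)

Inductive step : Conf -> Ev -> Conf -> Prop :=
| st1 c p o : cLoc c p = Idle ->
    step c (EvInv p o) (setL c p (L2 o))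
| st2 c p o : cLoc c p = L2 o ->
    step c (EvFAI p (cC c)) (setL (setC c (S (cC c))) p (L3 o (cC c)))
| st3 c p o t : cLoc c p = L3 o t ->
    step c (EvLocal p) (setL (setH c (upd (cH c) p (t, RNull))) p (L4 o t))
| st4_loop c p o t : cLoc c p = L4 o t -> cH c p = (t, RNull) ->
    step c (EvLocal p) (setL c p (L5 o t))
| st4_exit c p o t : cLoc c p = L4 o t -> cH c p <> (t, RNull) ->
    step c (EvLocal p) (setL c p (L14 o t))
| st5 c p o t ts ss rs ps : cLoc c p = L5 o t -> cS c = (ts, ss, rs, ps) ->
    step c (EvLocal p) (setL c p (L6 o t ts ss rs ps))
| st6_ok c p o t ts ss rs q : cLoc c p = L6 o t ts ss rs (HPtr q) ->
    cH c q = (ts, RNull) ->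
    step c (EvLocal p)
      (setL (setH c (upd (cH c) q (ts, rs))) p (L7 o t ts ss rs (HPtr q)))
| st6_fail c p o t ts ss rs ps : cLoc c p = L6 o t ts ss rs ps ->
    deref c ps <> (ts, RNull) ->
    step c (EvLocal p) (setL c p (L7 o t ts ss rs ps))
| st7_ok c p o t ts ss rs ps : cLoc c p = L7 o t ts ss rs ps ->
    fst (fst (cA c)) > t ->
    step c (EvLocal p)
      (setL (setA c (t, Some o, HPtr p)) p (L8 o t ts ss rs ps))
| st7_fail c p o t ts ss rs ps : cLoc c p = L7 o t ts ss rs ps ->
    ~ fst (fst (cA c)) > t ->
    step c (EvLocal p) (setL c p (L8 o t ts ss rs ps))
| st8 c p o t ts ss rs ps t' o' p' : cLoc c p = L8 o t ts ss rs ps ->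
    cA c = (t', o', p') ->
    step c (EvLocal p) (setL c p (L9 o t ts ss rs ps t' o' p'))
| st9 c p o t ts ss rs ps t' o' p' th rh :
    cLoc c p = L9 o t ts ss rs ps t' o' p' -> deref c p' = (th, rh) ->
    step c (EvLocal p) (setL c p (L10 o t ts ss rs ps t' o' p' th rh))
| st10_then c p o t ts ss rs ps t' o' p' th rh :
    cLoc c p = L10 o t ts ss rs ps t' o' p' th rh -> (th, rh) = (t', RNull) ->
    step c (EvLocal p) (setL c p (L11 o t ts ss rs ps t' o' p'))
| st10_else c p o t ts ss rs ps t' o' p' th rh :
    cLoc c p = L10 o t ts ss rs ps t' o' p' th rh -> (th, rh) <> (t', RNull) ->
    step c (EvLocal p) (setL c p (L13 o t t' o' p'))
| st11 c p o t ts ss rs ps t' oo p' s' r' :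
    cLoc c p = L11 o t ts ss rs ps t' (Some oo) p' -> applyT oo ss s' r' ->
    step c (EvLocal p) (setL c p (L12 o t ts ss rs ps t' (Some oo) p' s' r'))
| st12_ok c p o t ts ss rs ps t' o' p' s' r' :
    cLoc c p = L12 o t ts ss rs ps t' o' p' s' r' -> cS c = (ts, ss, rs, ps) ->
    step c (EvL12 p (t', s', RVal r', p') true)
      (setL (setS c (t', s', RVal r', p')) p (L4 o t))
| st12_fail c p o t ts ss rs ps t' o' p' s' r' :
    cLoc c p = L12 o t ts ss rs ps t' o' p' s' r' -> cS c <> (ts, ss, rs, ps) ->
    step c (EvL12 p (t', s', RVal r', p') false) (setL c p (L4 o t))
| st13_ok c p o t t' o' p' : cLoc c p = L13 o t t' o' p' ->
    cA c = (t', o', p') ->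
    step c (EvLocal p) (setL (setA c (t, Some o, HPtr p)) p (L4 o t))
| st13_fail c p o t t' o' p' : cLoc c p = L13 o t t' o' p' ->
    cA c <> (t', o', p') ->
    step c (EvLocal p) (setL c p (L4 o t))
| st14 c p o t : cLoc c p = L14 o t ->
    step c (EvRet p (snd (cH c p))) (setL c p Idle).

Inductive run : Conf -> list Ev -> Conf -> Prop :=
| run_nil c : run c [] c
| run_cons c e c' es c'' : step c e c' -> run c' es c'' -> run c (e :: es) c''.

(* Initial configuration: C = 1, A = (0, NOOP, h(NOOP)),
   S = (0, s0, bottom, h(NOOP)); H_p arbitrary (never read before written). *)
Definition init (s0 : St) (H0 : nat -> nat * Resp Res) : Conf :=
  mkConf 1 (0, None, HNoop) (0, s0, RBot, HNoop) H0 (fun _ => Idle).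

End Semantics.

Arguments EvInv {Op Res St}.
Arguments EvFAI {Op Res St}.
Arguments EvL12 {Op Res St}.
Arguments EvRet {Op Res St}.
Arguments EvLocal {Op Res St}.
Arguments init {Op Res St}.

(* Main.v *)
Require Import Defs.
From Stdlib Require Import List PeanoNat Lia.
Import ListNotations.

Definition tS {Res St} (Z : nat * St * Resp Res * Ptr) : nat := fst (fst (fst Z)).
Definition rS {Res St} (Z : nat * St * Resp Res * Ptr) : Resp Res := snd (fst Z).
Definition pS {Res St} (Z : nat * St * Resp Res * Ptr) : Ptr := snd Z.
Definition pairS {Res St} (Z : nat * St * Resp Res * Ptr) : nat * Ptr := (tS Z, pS Z).

Definition loct4 {Op Res St} (l : Loc Op Res St) : option nat :=
  match l with
  | Idle _ _ _ | L2 _ _ _ | L3 _ _ _ _ => None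
  | L4 _ _ _ t | L5 _ _ _ t | L14 _ _ _ t => Some t
  | L6 _ t _ _ _ _ | L7 _ t _ _ _ _ | L8 _ t _ _ _ _ => Some t
  | L9 _ t _ _ _ _ _ _ _ | L11 _ t _ _ _ _ _ _ _ => Some t
  | L10 _ t _ _ _ _ _ _ _ _ _ | L12 _ t _ _ _ _ _ _ _ _ _ => Some t
  | L13 _ _ _ t _ _ _ => Some t
  end.

Definition l3t {Op Res St} (l : Loc Op Res St) : option nat :=
  match l with L3 _ _ _ t => Some t | _ => None end.

Definition savedS {Op Res St} (l : Loc Op Res St) : option (nat * St * Resp Res * Ptr) :=
  match l with
  | L6 _ _ ts ss rs ps | L7 _ _ ts ss rs ps | L8 _ _ ts ss rs ps => Some (ts, ss, rs, ps)
  | L9 _ _ ts ss rs ps _ _ _ | L11 _ _ ts ss rs ps _ _ _ => Some (ts, ss, rs, ps)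
  | L10 _ _ ts ss rs ps _ _ _ _ _ | L12 _ _ ts ss rs ps _ _ _ _ _ => Some (ts, ss, rs, ps)
  | _ => None
  end.

Definition savedS7 {Op Res St} (l : Loc Op Res St) : option (nat * St * Resp Res * Ptr) :=
  match l with
  | L7 _ _ ts ss rs ps | L8 _ _ ts ss rs ps => Some (ts, ss, rs, ps)
  | L9 _ _ ts ss rs ps _ _ _ | L11 _ _ ts ss rs ps _ _ _ => Some (ts, ss, rs, ps)
  | L10 _ _ ts ss rs ps _ _ _ _ _ | L12 _ _ ts ss rs ps _ _ _ _ _ => Some (ts, ss, rs, ps)
  | _ => None
  end.

Definition savedA {Op Res St} (l : Loc Op Res St) : option (nat * Ptr) :=
  match l with
  | L9 _ _ _ _ _ _ t' _ p' | L11 _ _ _ _ _ _ t' _ p' => Some (t', p')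
  | L10 _ _ _ _ _ _ t' _ p' _ _ | L12 _ _ _ _ _ _ t' _ p' _ _ => Some (t', p')
  | L13 _ _ _ _ t' _ p' => Some (t', p')
  | _ => None
  end.

Definition K7loc {Op Res St} (c : Conf Op Res St) (l : Loc Op Res St) : Prop :=
  forall Z, savedS7 l = Some Z -> cS c = Z -> deref c (pS Z) <> (tS Z, RNull).

Definition K12loc {Op Res St} (c : Conf Op Res St) (W : list (nat * St * Resp Res * Ptr))
  (l : Loc Op Res St) : Prop :=
  match l with
  | L10 _ _ ts ss rs ps t' _ p' th rh =>
      cS c = (ts, ss, rs, ps) -> (th, rh) = (t', RNull) -> forall w, In w W -> pairS w <> (t', p')
  | L11 _ _ ts ss rs ps t' _ p' | L12 _ _ ts ss rs ps t' _ p' _ _ =>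
      cS c = (ts, ss, rs, ps) -> forall w, In w W -> pairS w <> (t', p')
  | _ => True
  end.

Definition Hist {Res St} (W : list (nat * St * Resp Res * Ptr)) Z : Prop :=
  (rS Z = RBot /\ pS Z = HNoop) \/ In Z W.

Definition PairIn {Op Res St} (c : Conf Op Res St) (W : list (nat * St * Resp Res * Ptr)) t x : Prop :=
  (fst (fst (cA c)) = t /\ snd (cA c) = HPtr x) \/ pairS (cS c) = (t, HPtr x) \/
  (exists q Z, savedS (cLoc c q) = Some Z /\ pairS Z = (t, HPtr x)) \/
  (exists q, savedA (cLoc c q) = Some (t, HPtr x)) \/
  (exists w, In w W /\ pairS w = (t, HPtr x)).

Record Inv {Op Res St} (c : Conf Op Res St) (W : list (nat * St * Resp Res * Ptr)) : Prop := {
 iC : forall q t0, (loct4 (cLoc c q) = Some t0 \/ l3t (cLoc c q) = Some t0) -> t0 < cC c;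
 iHX1 : forall t x t0, PairIn c W t x -> loct4 (cLoc c x) = Some t0 -> t <= t0;
 iHX2 : forall t x, PairIn c W t x -> loct4 (cLoc c x) = None -> cH c x <> (t, RNull) /\ t < cC c;
 iHX3 : forall t x o t0, PairIn c W t x -> cLoc c x = L3 _ _ o t0 -> t < t0;
 iH4 : forall x t0, loct4 (cLoc c x) = Some t0 -> fst (cH c x) = t0;
 iH14 : forall x o t0, cLoc c x = L14 _ _ o t0 -> cH c x <> (t0, RNull);
 iR : forall x t0, loct4 (cLoc c x) = Some t0 ->
        cH c x = (t0, RNull) \/ exists s' r', cH c x = (t0, RVal r') /\ In (t0, s', RVal r', HPtr x) W;
 iHistS : Hist W (cS c);
 iHist : forall q Z, savedS (cLoc c q) = Some Z -> Hist W Z;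
 iWf : forall w, In w W -> exists r, rS w = RVal r;
 iG : forall w t x, In w W -> pairS w = (t, HPtr x) ->
        cH c x <> (t, RNull) \/ pairS (cS c) = (t, HPtr x);
 iK7 : forall q, K7loc c (cLoc c q);
 iK12 : forall q, K12loc c W (cLoc c q);
 iU : forall a b, In a W -> In b W -> pairS a = pairS b -> a = b }.

Lemma cLoc_setL {Op Res St} (c : Conf Op Res St) p l q :
  cLoc (setL c p l) q = if Nat.eq_dec q p then l else cLoc c q.
Proof. reflexivity. Qed.

Lemma Inv_init {Op Res St} (s0 : St) H0 : Inv (init (Op:=Op) (Res:=Res) s0 H0) [].
Proof.
  assert (NP : forall t x, ~ PairIn (init (Op:=Op) (Res:=Res) s0 H0) [] t x).
  { intros t x HP; unfold PairIn in HP; simpl in HP.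
    destruct HP as [H|[H|[H|[H|H]]]].
    - destruct H; discriminate.
    - discriminate.
    - destruct H as [q [Z [H _]]]; discriminate.
    - destruct H as [q H]; discriminate.
    - destruct H as [w [H _]]; contradiction. }
  constructor; simpl; intros; try discriminate;
    try (exfalso; eapply NP; eassumption); try contradiction.
  - destruct H; discriminate.
  - left; split; reflexivity.
  - exact I.
Qed.

Lemma loct4_l3t {Op Res St} (l : Loc Op Res St) : loct4 l <> None -> l3t l = None.
Proof. destruct l; simpl; congruence. Qed.

Lemma PairIn_local {Op Res St} (c : Conf Op Res St) W p l l' t x :
  cLoc c p = l ->
  (forall Z, savedS l' = Some Z -> savedS l = Some Z \/ Z = cS c) ->
  (forall a, savedA l' = Some a -> savedA l = Some a \/ a = (fst (fst (cA c)), snd (cA c))) ->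
  PairIn (setL c p l') W t x -> PairIn c W t x.
Proof.
  intros Hl HS HA HP. unfold PairIn in *; simpl in HP.
  destruct HP as [H|[H|[H|[H|H]]]]; auto.
  - destruct H as [q [Z [H1 H2]]]. unfold upd in H1.
    destruct (Nat.eq_dec q p).
    + match goal with e : ?a = p |- _ => subst a end. destruct (HS Z H1) as [H3|H3].
      * right; right; left; exists p, Z; rewrite Hl; auto.
      * subst Z; right; left; auto.
    + right; right; left; exists q, Z; auto.
  - destruct H as [q H1]. unfold upd in H1.
    destruct (Nat.eq_dec q p).
    + match goal with e : ?a = p |- _ => subst a end. destruct (HA _ H1) as [H3|H3].
      * right; right; right; left; exists p; rewrite Hl; auto.
      * inversion H3; left; auto.
    + right; right; right; left; exists q; auto.
Qed.

Ltac cp x p := unfold upd in *; destruct (Nat.eq_dec x p); [subst x|].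

Lemma local_step {Op Res St} (c : Conf Op Res St) W p l l' :
  Inv c W -> cLoc c p = l -> loct4 l' = loct4 l -> l3t l' = l3t l ->
  (forall Z, savedS l' = Some Z -> savedS l = Some Z \/ Z = cS c) ->
  (forall a, savedA l' = Some a -> savedA l = Some a \/ a = (fst (fst (cA c)), snd (cA c))) ->
  K7loc c l' -> K12loc c W l' ->
  (forall o t0, l' = L14 _ _ o t0 -> cH c p <> (t0, RNull)) ->
  Inv (setL c p l') W.
Proof.
  intros I Hl Ht H3 HS HA K7 K12 H14.
  assert (PI : forall t x, PairIn (setL c p l') W t x -> PairIn c W t x)
    by (intros; eapply PairIn_local; eauto).
  destruct I as [IC HX1 HX2 HX3 HH4 HH14 RR HHS HHi Wf G KK7 KK12 U]; constructor; simpl; intros.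
  - cp q p.
    + rewrite Ht, H3 in H. eapply IC with (q := p). rewrite Hl; exact H.
    + eauto.
  - cp x p.
    + eapply HX1; [apply PI; eauto|]. rewrite Hl, <- Ht; auto.
    + eauto.
  - cp x p.
    + eapply HX2; [apply PI; eauto|]. rewrite Hl, <- Ht; auto.
    + eauto.
  - cp x p.
    + subst l'. simpl in H3. destruct l; simpl in H3; try discriminate.
      inversion H3; subst. eapply HX3; [apply PI; eauto| exact Hl].
    + eauto.
  - cp x p.
    + apply HH4. rewrite Hl, <- Ht; auto.
    + eauto.
  - cp x p.
    + eauto.
    + eauto.
  - cp x p.
    + apply RR. rewrite Hl, <- Ht; auto.
    + eauto.
  - auto.
  - cp q p.
    + destruct (HS _ H) as [H1|H1].
      * eapply HHi; rewrite Hl; eauto.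
      * subst; auto.
    + eauto.
  - eauto.
  - eauto.
  - cp q p; [exact K7| exact (KK7 q)].
  - cp q p; [exact K12| exact (KK12 q)].
  - eauto.
Qed.

Lemma step2 {Op Res St} (c : Conf Op Res St) W p o :
  Inv c W -> cLoc c p = L2 _ _ o ->
  Inv (setL (setC c (S (cC c))) p (L3 _ _ o (cC c))) W.
Proof.
  intros I Hl.
  assert (PI : forall t x, PairIn (setL (setC c (S (cC c))) p (L3 _ _ o (cC c))) W t x -> PairIn c W t x).
  { intros t x H. apply (PairIn_local (setC c (S (cC c))) W p (L2 _ _ o) (L3 _ _ o (cC c)));
    [exact Hl | intros Z HZ; discriminate | intros a Ha; discriminate | exact H]. }
  destruct I as [IC HX1 HX2 HX3 HH4 HH14 RR HHS HHi Wf G KK7 KK12 U]; constructor; simpl; intros.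
  - cp q p.
    + simpl in H. destruct H as [H|H]; inversion H; lia.
    + specialize (IC q t0 H). lia.
  - cp x p.
    + discriminate.
    + eauto.
  - cp x p.
    + destruct (HX2 t p (PI _ _ H)) as [A1 A2]; [rewrite Hl; auto| split; auto; lia].
    + destruct (HX2 t x (PI _ _ H)) as [A1 A2]; auto.
  - cp x p.
    + inversion H0; subst. destruct (HX2 t p (PI _ _ H)) as [A1 A2]; [rewrite Hl; auto| lia].
    + eauto.
  - cp x p.
    + discriminate.
    + eauto.
  - cp x p.
    + discriminate.
    + eauto.
  - cp x p.
    + discriminate.
    + eauto.
  - auto.
  - cp q p.
    + discriminate.
    + eauto.
  - eauto.
  - eauto.
  - cp q p; [intros Z HZ; discriminate| exact (KK7 q)].
  - cp q p; [exact I| exact (KK12 q)].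
  - eauto.
Qed.

Lemma savedS7_savedS {Op Res St} (l : Loc Op Res St) Z : savedS7 l = Some Z -> savedS l = Some Z.
Proof. destruct l; simpl; congruence. Qed.

Lemma PairIn_saved7 {Op Res St} (c : Conf Op Res St) W q Z x :
  savedS7 (cLoc c q) = Some Z -> pS Z = HPtr x -> PairIn c W (tS Z) x.
Proof.
  intros H1 H2. right; right; left. exists q, Z. split.
  - apply savedS7_savedS; auto.
  - unfold pairS; rewrite H2; auto.
Qed.

Lemma PairIn_W {Op Res St} (c : Conf Op Res St) W w t x :
  In w W -> pairS w = (t, HPtr x) -> PairIn c W t x.
Proof. intros; right; right; right; right; eauto. Qed.

Lemma step3 {Op Res St} (c : Conf Op Res St) W p o t0 :
  Inv c W -> cLoc c p = L3 _ _ o t0 ->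
  Inv (setL (setH c (upd (cH c) p (t0, RNull))) p (L4 _ _ o t0)) W.
Proof.
  intros I Hl.
  assert (PI : forall t x, PairIn (setL (setH c (upd (cH c) p (t0, RNull))) p (L4 _ _ o t0)) W t x -> PairIn c W t x).
  { intros t x H. apply (PairIn_local (setH c (upd (cH c) p (t0, RNull))) W p (L3 _ _ o t0) (L4 _ _ o t0));
    [exact Hl | intros Z HZ; discriminate | intros a Ha; discriminate | exact H]. }
  destruct I as [IC HX1 HX2 HX3 HH4 HH14 RR HHS HHi Wf G KK7 KK12 U]; constructor; simpl; intros.
  - cp q p.
    + simpl in H. destruct H as [H|H]; inversion H; subst. apply (IC p). rewrite Hl; auto.
    + eauto.
  - cp x p.
    + simpl in H0; inversion H0; subst. specialize (HX3 t p o t1 (PI _ _ H) Hl). lia.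
    + eauto.
  - cp x p.
    + discriminate.
    + destruct (HX2 t x (PI _ _ H)) as [A1 A2]; auto.
  - cp x p.
    + discriminate.
    + eauto.
  - cp x p.
    + simpl in H; inversion H; auto.
    + eauto.
  - cp x p.
    + discriminate.
    + eauto.
  - cp x p.
    + simpl in H; inversion H; auto.
    + eauto.
  - auto.
  - cp q p.
    + discriminate.
    + eauto.
  - eauto.
  - cp x p.
    + left. specialize (HX3 t p o t0 (PairIn_W c W w t p H H0) Hl). intro E; inversion E; lia.
    + destruct (G w t x H H0); auto.
  - cp q p.
    + intros Z HZ; discriminate.
    + intros Z HZ HcS. pose proof (KK7 q Z HZ HcS) as K. unfold deref in *.
      destruct (pS Z) as [|y] eqn:E; auto.
      destruct (Nat.eq_dec y p).
      * subst y. specialize (HX3 _ _ _ _ (PairIn_saved7 c W q Z p HZ E) Hl).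
        intro E2; simpl in E2; destruct (Nat.eq_dec p p); [|congruence]; inversion E2; lia.
      * simpl; destruct (Nat.eq_dec y p); [congruence|exact K].
  - cp q p; [exact I| exact (KK12 q)].
  - eauto.
Qed.

Lemma setH_inv {Op Res St} (c : Conf Op Res St) W y ts ss r0 :
  Inv c W -> cH c y = (ts, RNull) -> PairIn c W ts y ->
  In (ts, ss, RVal r0, HPtr y) W ->
  Inv (setH c (upd (cH c) y (ts, RVal r0))) W.
Proof.
  intros I Hy HP HW.
  destruct I as [IC HX1 HX2 HX3 HH4 HH14 RR HHS HHi Wf G KK7 KK12 U]; constructor; simpl; intros; eauto.
  - unfold upd. destruct (Nat.eq_dec x y); [subst x|]; eauto.
    destruct (loct4 (cLoc c y)) eqn:E; [discriminate|].
    destruct (HX2 _ _ HP E); contradiction.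
  - unfold upd. destruct (Nat.eq_dec x y); [subst x|]; eauto.
    simpl. pose proof (HH4 _ _ H) as E. rewrite Hy in E; simpl in E; auto.
  - unfold upd. destruct (Nat.eq_dec x y); [subst x|]; eauto.
    pose proof (HH14 _ _ _ H) as E. assert (fst (cH c y) = t0) by (apply HH4; rewrite H; auto).
    rewrite Hy in *. simpl in *; subst; congruence.
  - unfold upd. destruct (Nat.eq_dec x y); [subst x|]; eauto.
    right. pose proof (HH4 _ _ H) as E. rewrite Hy in E; simpl in E; subst. eauto.
  - unfold upd. destruct (Nat.eq_dec x y); [subst x|]; eauto.
    left; congruence.
  - intros Z HZ HcS. pose proof (KK7 q Z HZ HcS) as K. unfold deref in *.
    destruct (pS Z) as [|z]; auto. simpl. unfold upd. destruct (Nat.eq_dec z y); auto. congruence.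
Qed.

Lemma step6ok {Op Res St} (c : Conf Op Res St) W p o t ts ss rs y :
  Inv c W -> cLoc c p = L6 o t ts ss rs (HPtr y) -> cH c y = (ts, RNull) ->
  Inv (setL (setH c (upd (cH c) y (ts, rs))) p (L7 o t ts ss rs (HPtr y))) W.
Proof.
  intros I Hl Hy.
  assert (HH : Hist W (ts, ss, rs, HPtr y)) by (eapply (iHist _ _ I) with (q := p); rewrite Hl; reflexivity).
  destruct HH as [[_ HH]|HH]; [discriminate|].
  destruct (iWf _ _ I _ HH) as [r0 Hr]. unfold rS in Hr; simpl in Hr; subst rs.
  assert (PP : PairIn c W ts y).
  { right; right; left. exists p, (ts, ss, RVal r0, HPtr y). rewrite Hl; split; reflexivity. }
  pose proof (setH_inv c W y ts ss r0 I Hy PP HH) as I1.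
  refine (local_step _ W p (L6 o t ts ss (RVal r0) (HPtr y)) (L7 o t ts ss (RVal r0) (HPtr y)) I1 Hl eq_refl eq_refl _ _ _ _ _).
  - intros Z HZ; left; exact HZ.
  - intros a Ha; discriminate.
  - intros Z HZ HcS. simpl in HZ. inversion HZ; subst. simpl. unfold upd.
    destruct (Nat.eq_dec y y); congruence.
  - exact Logic.I.
  - intros o1 t1 E; discriminate.
Qed.

Lemma setA_inv {Op Res St} (c : Conf Op Res St) W p t0 o :
  Inv c W -> loct4 (cLoc c p) = Some t0 -> Inv (setA c (t0, Some o, HPtr p)) W.
Proof.
  intros I Hl.
  assert (PI : forall t x, PairIn (setA c (t0, Some o, HPtr p)) W t x -> PairIn c W t x \/ (t = t0 /\ x = p)).
  { intros t x H. destruct H as [H|H].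
    - simpl in H. destruct H as [H1 H2]. inversion H2; auto.
    - left; right; exact H. }
  destruct I as [IC HX1 HX2 HX3 HH4 HH14 RR HHS HHi Wf G KK7 KK12 U]; constructor; simpl; intros; eauto.
  - destruct (PI _ _ H) as [H1|[-> ->]]; eauto. rewrite Hl in H0; inversion H0; auto.
  - destruct (PI _ _ H) as [H1|[-> ->]]; eauto. congruence.
  - destruct (PI _ _ H) as [H1|[-> ->]]; eauto. rewrite H0 in Hl; discriminate.
Qed.

Lemma step7ok {Op Res St} (c : Conf Op Res St) W p o t ts ss rs ps :
  Inv c W -> cLoc c p = L7 o t ts ss rs ps ->
  Inv (setL (setA c (t, Some o, HPtr p)) p (L8 o t ts ss rs ps)) W.
Proof.
  intros I Hl.
  assert (I1 := setA_inv c W p t o I (ltac:(rewrite Hl; reflexivity))).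
  refine (local_step _ W p (L7 o t ts ss rs ps) (L8 o t ts ss rs ps) I1 Hl eq_refl eq_refl _ _ _ _ _).
  - intros Z HZ; left; exact HZ.
  - intros a Ha; discriminate.
  - intros Z HZ HcS. apply (iK7 _ _ I p Z); [rewrite Hl; exact HZ| exact HcS].
  - exact Logic.I.
  - intros o1 t1 E; discriminate.
Qed.

Lemma step13ok {Op Res St} (c : Conf Op Res St) W p o t t' o' p' :
  Inv c W -> cLoc c p = L13 _ _ o t t' o' p' ->
  Inv (setL (setA c (t, Some o, HPtr p)) p (L4 _ _ o t)) W.
Proof.
  intros I Hl.
  assert (I1 := setA_inv c W p t o I (ltac:(rewrite Hl; reflexivity))).
  refine (local_step _ W p (L13 _ _ o t t' o' p') (L4 _ _ o t) I1 Hl eq_refl eq_refl _ _ _ _ _).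
  - intros Z HZ; discriminate.
  - intros a Ha; discriminate.
  - intros Z HZ HcS; discriminate.
  - exact Logic.I.
  - intros o1 t1 E; discriminate.
Qed.

Lemma setS_inv {Op Res St} (c : Conf Op Res St) W p o t ts ss rs ps t' o' p' s' r' :
  Inv c W -> cLoc c p = L12 o t ts ss rs ps t' o' p' s' r' -> cS c = (ts, ss, rs, ps) ->
  Inv (setS c (t', s', RVal r', p')) (W ++ [(t', s', RVal r', p')]).
Proof.
  intros I Hl HcS.
  set (W0 := (t', s', RVal r', p')).
  assert (Fr : forall w, In w W -> pairS w <> (t', p')).
  { pose proof (iK12 _ _ I p) as K. rewrite Hl in K. simpl in K. exact (K HcS). }
  assert (HistNE : forall Z, Hist W Z -> Z <> W0).
  { intros Z [[H1 _]|H1] E; subst Z.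
    - unfold rS, W0 in H1; simpl in H1; discriminate.
    - apply (Fr _ H1). reflexivity. }
  assert (NE : forall q Z, savedS (cLoc c q) = Some Z -> Z <> W0).
  { intros q Z H. apply HistNE. eapply (iHist _ _ I); eauto. }
  assert (PA : savedA (cLoc c p) = Some (t', p')) by (rewrite Hl; reflexivity).
  assert (PI : forall t x, PairIn (setS c W0) (W ++ [W0]) t x -> PairIn c W t x).
  { intros t0 x H. destruct H as [H|[H|[H|[H|H]]]].
    - left; exact H.
    - simpl in H. unfold pairS, W0, tS, pS in H; simpl in H. inversion H; subst.
      right; right; right; left. exists p; rewrite PA; reflexivity.
    - right; right; left; exact H.
    - right; right; right; left; exact H.
    - destruct H as [w [H1 H2]]. apply in_app_or in H1. destruct H1 as [H1|[H1|[]]].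
      + right; right; right; right; eauto.
      + subst w. unfold pairS, W0, tS, pS in H2; simpl in H2. inversion H2; subst.
        right; right; right; left. exists p; rewrite PA; reflexivity. }
  assert (Sub : forall w, In w W -> In w (W ++ [W0])) by (intros; apply in_or_app; auto).
  assert (HistM : forall Z, Hist W Z -> Hist (W ++ [W0]) Z).
  { intros Z [H|H]; [left; auto| right; auto]. }
  destruct I as [IC HX1 HX2 HX3 HH4 HH14 RR HHS HHi Wf G KK7 KK12 U]; constructor; simpl; intros; eauto.
  - destruct (RR x t0 H) as [H1|[s1 [r1 [H1 H2]]]]; [left; auto| right; exists s1, r1; split; auto].
  - right; apply in_or_app; right; left; reflexivity.
  - apply in_app_or in H. destruct H as [H|[H|[]]]; eauto. subst w. eexists; reflexivity.
  - apply in_app_or in H. destruct H as [H|[H|[]]].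
    + destruct (G w t0 x H H0) as [H1|H1]; [left; auto|].
      left. pose proof (KK7 p (ts, ss, rs, ps)) as K. rewrite Hl in K.
      specialize (K eq_refl HcS). rewrite HcS in H1. unfold pairS, tS, pS in H1; simpl in H1.
      inversion H1; subst. exact K.
    + subst w. right. exact H0.
  - intros Z HZ HcS'. exfalso. apply (NE q Z); [apply savedS7_savedS; exact HZ| symmetry; exact HcS'].
  - pose proof (NE q) as N. unfold K12loc. destruct (cLoc c q); simpl; auto;
      intros HcS'; exfalso; apply (N _ eq_refl); symmetry; exact HcS'.
  - apply in_app_or in H; apply in_app_or in H0.
    destruct H as [H|[H|[]]]; destruct H0 as [H0|[H0|[]]]; subst; eauto.
    + exfalso; apply (Fr a H). rewrite H1; reflexivity.
    + exfalso; apply (Fr b H0). rewrite <- H1; reflexivity.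
Qed.

Lemma step12ok {Op Res St} (c : Conf Op Res St) W p o t ts ss rs ps t' o' p' s' r' :
  Inv c W -> cLoc c p = L12 o t ts ss rs ps t' o' p' s' r' -> cS c = (ts, ss, rs, ps) ->
  Inv (setL (setS c (t', s', RVal r', p')) p (L4 _ _ o t)) (W ++ [(t', s', RVal r', p')]).
Proof.
  intros I Hl HcS.
  assert (I1 := setS_inv c W p o t ts ss rs ps t' o' p' s' r' I Hl HcS).
  refine (local_step _ _ p _ (L4 _ _ o t) I1 Hl eq_refl eq_refl _ _ _ _ _).
  - intros Z HZ; discriminate.
  - intros a Ha; discriminate.
  - intros Z HZ HcS'; discriminate.
  - exact Logic.I.
  - intros o1 t1 E; discriminate.
Qed.

Lemma step14 {Op Res St} (c : Conf Op Res St) W p o t0 :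
  Inv c W -> cLoc c p = L14 _ _ o t0 -> Inv (setL c p (Idle _ _ _)) W.
Proof.
  intros I Hl.
  assert (PI : forall t x, PairIn (setL c p (Idle _ _ _)) W t x -> PairIn c W t x).
  { intros t x H. apply (PairIn_local c W p (L14 _ _ o t0) (Idle _ _ _));
    [exact Hl | intros Z HZ; discriminate | intros a Ha; discriminate | exact H]. }
  destruct I as [IC HX1 HX2 HX3 HH4 HH14 RR HHS HHi Wf G KK7 KK12 U]; constructor; simpl; intros.
  - cp q p.
    + destruct H as [H|H]; discriminate.
    + eauto.
  - cp x p.
    + discriminate.
    + eauto.
  - cp x p.
    + pose proof (HX1 t p t0 (PI _ _ H) ltac:(rewrite Hl; reflexivity)) as A1.
      pose proof (HH4 p t0 ltac:(rewrite Hl; reflexivity)) as A2.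
      pose proof (HH14 p o t0 Hl) as A3.
      pose proof (IC p t0 ltac:(rewrite Hl; left; reflexivity)) as A4.
      split; [|lia]. intro E. rewrite E in A2; simpl in A2; subst. congruence.
    + eauto.
  - cp x p.
    + discriminate.
    + eauto.
  - cp x p.
    + discriminate.
    + eauto.
  - cp x p.
    + discriminate.
    + eauto.
  - cp x p.
    + discriminate.
    + eauto.
  - auto.
  - cp q p.
    + discriminate.
    + eauto.
  - eauto.
  - eauto.
  - cp q p; [intros Z HZ; discriminate| exact (KK7 q)].
  - cp q p; [exact Logic.I| exact (KK12 q)].
  - eauto.
Qed.

Fixpoint succ {Op Res St} (es : list (Ev Op Res St)) : list (nat * St * Resp Res * Ptr) :=
  match es with
  | [] => []
  | EvL12 _ v true :: l => v :: succ l
  | _ :: l => succ l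
  end.

Lemma succ_app {Op Res St} (l1 l2 : list (Ev Op Res St)) : succ (l1 ++ l2) = succ l1 ++ succ l2.
Proof. induction l1 as [|e l IH]; simpl; auto. destruct e; auto; destruct ok; simpl; f_equal; auto. Qed.

Ltac oldK7 I p Hl := intros Z HZ HcS; apply (iK7 _ _ I p Z); [rewrite Hl; exact HZ| exact HcS].

Lemma step_inv {Op Res St} applyT (c : Conf Op Res St) W e c' :
  Inv c W -> step applyT c e c' -> Inv c' (W ++ succ [e]).
Proof.
  intros I Hs. destruct Hs; simpl; try rewrite app_nil_r.
  - refine (local_step _ W p _ (L2 _ _ o) I H eq_refl eq_refl _ _ _ _ _);
      [intros Z HZ; discriminate | intros a Ha; discriminate | intros Z HZ; discriminate
      | exact Logic.I | intros o1 t1 E; discriminate].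
  - eapply step2; eauto.
  - eapply step3; eauto.
  - refine (local_step _ W p _ (L5 _ _ o t) I H eq_refl eq_refl _ _ _ _ _);
      [intros Z HZ; discriminate | intros a Ha; discriminate | intros Z HZ; discriminate
      | exact Logic.I | intros o1 t1 E; discriminate].
  - refine (local_step _ W p _ (L14 _ _ o t) I H eq_refl eq_refl _ _ _ _ _);
      [intros Z HZ; discriminate | intros a Ha; discriminate | intros Z HZ; discriminate
      | exact Logic.I | intros o1 t1 E; inversion E; subst; exact H0].
  - refine (local_step _ W p _ (L6 o t ts ss rs ps) I H eq_refl eq_refl _ _ _ _ _);
      [ | intros a Ha; discriminate | intros Z HZ; discriminate
      | exact Logic.I | intros o1 t1 E; discriminate].
    intros Z HZ; simpl in HZ; inversion HZ; subst; right; symmetry; exact H0.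
  - eapply step6ok; eauto.
  - refine (local_step _ W p _ (L7 o t ts ss rs ps) I H eq_refl eq_refl _ _ _ _ _);
      [intros Z HZ; left; exact HZ | intros a Ha; discriminate | 
      | exact Logic.I | intros o1 t1 E; discriminate].
    intros Z HZ HcS; simpl in HZ; inversion HZ; subst; exact H0.
  - eapply step7ok; eauto.
  - refine (local_step _ W p _ (L8 o t ts ss rs ps) I H eq_refl eq_refl _ _ _ _ _);
      [intros Z HZ; left; exact HZ | intros a Ha; discriminate | oldK7 I p H
      | exact Logic.I | intros o1 t1 E; discriminate].
  - refine (local_step _ W p _ (L9 o t ts ss rs ps t' o' p') I H eq_refl eq_refl _ _ _ _ _);
      [intros Z HZ; left; exact HZ | | oldK7 I p H
      | exact Logic.I | intros o1 t1 E; discriminate].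
    intros a Ha; simpl in Ha; inversion Ha; subst; right; rewrite H0; reflexivity.
  - refine (local_step _ W p _ (L10 o t ts ss rs ps t' o' p' th rh) I H eq_refl eq_refl _ _ _ _ _);
      [intros Z HZ; left; exact HZ | intros a Ha; left; exact Ha | oldK7 I p H
      | | intros o1 t1 E; discriminate].
    simpl. intros HcS E w Hw Hp. inversion E; subst th rh.
    destruct p' as [|x]; [simpl in H0; discriminate|]. simpl in H0.
    destruct (iG _ _ I w t' x Hw Hp) as [G1|G1]; [contradiction|].
    rewrite HcS in G1. unfold pairS, tS, pS in G1; simpl in G1. inversion G1; subst.
    pose proof (iK7 _ _ I p) as K. rewrite H in K.
    specialize (K _ eq_refl HcS). simpl in K. contradiction.
  - refine (local_step _ W p _ (L11 o t ts ss rs ps t' o' p') I H eq_refl eq_refl _ _ _ _ _);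
      [intros Z HZ; left; exact HZ | intros a Ha; left; exact Ha | oldK7 I p H
      | | intros o1 t1 E; discriminate].
    simpl. intros HcS. pose proof (iK12 _ _ I p) as K. rewrite H in K. simpl in K. exact (K HcS H0).
  - refine (local_step _ W p _ (L13 _ _ o t t' o' p') I H eq_refl eq_refl _ _ _ _ _);
      [intros Z HZ; discriminate | intros a Ha; left; exact Ha | intros Z HZ; discriminate
      | exact Logic.I | intros o1 t1 E; discriminate].
  - refine (local_step _ W p _ (L12 o t ts ss rs ps t' (Some oo) p' s' r') I H eq_refl eq_refl _ _ _ _ _);
      [intros Z HZ; left; exact HZ | intros a Ha; left; exact Ha | oldK7 I p H
      | | intros o1 t1 E; discriminate].
    simpl. intros HcS. pose proof (iK12 _ _ I p) as K. rewrite H in K. simpl in K. exact (K HcS).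
  - eapply step12ok; eauto.
  - refine (local_step _ W p _ (L4 _ _ o t) I H eq_refl eq_refl _ _ _ _ _);
      [intros Z HZ; discriminate | intros a Ha; discriminate | intros Z HZ; discriminate
      | exact Logic.I | intros o1 t1 E; discriminate].
  - eapply step13ok; eauto.
  - refine (local_step _ W p _ (L4 _ _ o t) I H eq_refl eq_refl _ _ _ _ _);
      [intros Z HZ; discriminate | intros a Ha; discriminate | intros Z HZ; discriminate
      | exact Logic.I | intros o1 t1 E; discriminate].
  - eapply step14; eauto.
Qed.

Lemma run_inv {Op Res St} applyT (c : Conf Op Res St) es c' :
  run applyT c es c' -> forall W, Inv c W -> Inv c' (W ++ succ es).
Proof.
  induction 1; intros W I.
  - rewrite app_nil_r; auto.
  - pose proof (step_inv applyT c W e c' I H) as I1.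
    specialize (IHrun _ I1). rewrite <- app_assoc, <- succ_app in IHrun. exact IHrun.
Qed.

Lemma run_split {Op Res St} applyT (l1 l2 : list (Ev Op Res St)) : forall c c'',
  run applyT c (l1 ++ l2) c'' -> exists c1, run applyT c l1 c1 /\ run applyT c1 l2 c''.
Proof.
  induction l1 as [|e l IH]; simpl; intros c c'' H.
  - exists c; split; [constructor|auto].
  - inversion H; subst. destruct (IH _ _ H5) as [c1 [A1 A2]].
    exists c1; split; auto. econstructor; eauto.
Qed.

Definition busy {Op Res St} t (l : Loc Op Res St) := loct4 l = Some t \/ l3t l = Some t.

Lemma step_busy {Op Res St} applyT (c : Conf Op Res St) e c' p t :
  step applyT c e c' -> (forall v, e <> EvRet p v) -> busy t (cLoc c p) -> busy t (cLoc c' p).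
Proof.
  intros Hs Hn Hb. destruct Hs; simpl; unfold upd;
    destruct (Nat.eq_dec p p0); auto; subst p0;
    unfold busy in *; try rewrite H in Hb; simpl in *; auto;
    try (destruct Hb as [Hb|Hb]; inversion Hb; subst; auto; fail).
  all: exfalso; eapply Hn; reflexivity.
Qed.

Lemma run_busy {Op Res St} applyT (c : Conf Op Res St) es c' p t :
  run applyT c es c' -> (forall v, ~ In (EvRet p v) es) -> busy t (cLoc c p) -> busy t (cLoc c' p).
Proof.
  induction 1; intros Hn Hb; auto.
  apply IHrun.
  - intros v Hv; apply (Hn v); right; auto.
  - eapply step_busy; eauto. intros v E; subst; apply (Hn v); left; auto.
Qed.

Lemma In_succ {Op Res St} (l : list (Ev Op Res St)) q w :
  In (EvL12 q w true) l -> In w (succ l).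
Proof.
  induction l as [|e l IH]; simpl; intros H; [contradiction|].
  destruct H as [H|H].
  - subst; simpl; auto.
  - destruct e; auto. destruct ok; simpl; auto.
Qed.

Theorem mainTheorem15 :
  forall (Op Res St : Type) (s0 : St)
    (delta : St -> Op -> St -> Res -> Prop)
    (applyT : Op -> St -> St -> Res -> Prop),
    (forall o s s' r, applyT o s s' r -> delta s o s' r) ->
    (forall o s, exists s' r, applyT o s s' r) ->
  forall (H0 : nat -> nat * Resp Res) (evs : list (Ev Op Res St)) cf,
    run applyT (init s0 H0) evs cf ->
  forall (p : nat) (o : Op) (i f j : nat) (t : nat) (v : Resp Res),
    nth_error evs i = Some (EvInv p o) ->
    i < f < j ->
    nth_error evs f = Some (EvFAI p t) ->
    nth_error evs j = Some (EvRet p v) ->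
    (forall m v', i < m < j -> nth_error evs m <> Some (EvRet p v')) ->
  forall (k q : nat) (s : St) (r : Res),
    nth_error evs k = Some (EvL12 q (t, s, RVal r, HPtr p) true) ->
    v = RVal r.
Proof.
  intros Op Res St s0 delta applyT _ _ H0 evs cf Hrun p o i f j t v Hi Hfj Hf Hj Hno k q s r Hk.
  destruct (nth_error_split evs j Hj) as [l1 [l2 [E1 L1]]].
  pose proof Hrun as Hrun'. rewrite E1 in Hrun'.
  destruct (run_split applyT l1 _ _ _ Hrun') as [cj [R1 R2]].
  inversion R2 as [|? ? c1 ? ? Hs Hr]; subst.
  assert (Hf1 : nth_error l1 f = Some (EvFAI p t)) by (rewrite nth_error_app1 in Hf by lia; exact Hf).
  destruct (nth_error_split l1 f Hf1) as [m1 [m2 [E2 L2]]].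
  pose proof R1 as R1'. rewrite E2 in R1'.
  destruct (run_split applyT m1 _ _ _ R1') as [cf0 [S1 S2]].
  inversion S2 as [|? ? cf1 ? ? Hs2 Hr2]; subst.
  assert (B1 : busy t (cLoc cf1 p)).
  { inversion Hs2; subst. simpl. unfold upd. destruct (Nat.eq_dec p p); [|congruence].
    right; reflexivity. }
  assert (B2 : busy t (cLoc cj p)).
  { apply (run_busy applyT cf1 m2 cj p t Hr2); auto.
    intros v' Hin. destruct (In_nth_error _ _ Hin) as [kk Hkk].
    assert (kk < length m2) by (apply nth_error_Some; congruence).
    apply (Hno (S (length m1) + kk) v'); [rewrite length_app; simpl; lia|].
    rewrite <- app_assoc. rewrite nth_error_app2 by lia.
    replace (S (length m1) + kk - length m1) with (S kk) by lia.
    simpl. rewrite nth_error_app1 by lia. exact Hkk. }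
  inversion Hs as [| | | | | | | | | | | | | | | | | | | ? ? o0 t0 H1]; subst.
  unfold busy in B2. rewrite H1 in B2. simpl in B2.
  destruct B2 as [B2|B2]; [|discriminate]. inversion B2; subst t0.
  pose proof (run_inv applyT _ _ _ R1 [] (Inv_init s0 H0)) as Ij. simpl in Ij.
  pose proof (run_inv applyT _ _ _ Hrun [] (Inv_init s0 H0)) as If. simpl in If.
  destruct (iR _ _ Ij p t ltac:(rewrite H1; reflexivity)) as [Hn|[s' [r' [Hin2 Hin]]]].
  - exfalso. exact (iH14 _ _ Ij p o0 t H1 Hn).
  - assert (InF : In (t, s', RVal r', HPtr p) (succ ((m1 ++ EvFAI p t :: m2) ++ EvRet p (snd (cH cj p)) :: l2))).
    { rewrite succ_app. apply in_or_app; left. exact Hin. }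
    assert (InK : In (t, s, RVal r, HPtr p) (succ ((m1 ++ EvFAI p t :: m2) ++ EvRet p (snd (cH cj p)) :: l2))).
    { eapply In_succ. eapply nth_error_In. exact Hk. }
    pose proof (iU _ _ If _ _ InF InK eq_refl) as EE. rewrite Hin2. simpl. inversion EE; reflexivity.
Qed.
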